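(* Let $\Gamma=(V,m,\tau)$ be a weak $W$-graph and let $A\subseteq\Delta$. Then the subspaces of $\mathbb{C}V$ spanned by $V(A,-)$ and by $V(A,-)\cup V(A,0)$ are stable under $W(A)$.
   Context: $W$ is a Weyl group with a fixed set $\Delta$ of simple roots; for a root $\alpha$, $s_\alpha$ is the reflection in the hyperplane orthogonal to $\alpha$. A weak $W$-graph is a triple $\Gamma=(V,m,\tau)$ where $V$ is a finite set, $m:V\times V\to\mathbb{C}$ is a map, and $\tau$ is a map from $V$ to the power set of $\Delta$, such that the linear maps $s_\alpha:\mathbb{C}V\to\mathbb{C}V$ ($\alpha\in\Delta$) given on basis vectors by $s_\alpha(v)=-v$ if $\alpha\in\tau(v)$ and $s_\alpha(v)=v-\sum_{u\in V,\ \alpha\in\tau(u)} m(u,v)u$ if $\alpha\notin\tau(v)$ define a representation of $W$ on $\mathbb{C}V$. For $A\subseteq\Delta$, $W(A)$ is the subgroup of $W$ generated by $\{s_\alpha:\alpha\in A\}$, and $V(A,-)=\{v\in V: A\subseteq\tau(v)\}$, $V(A,0)=\{v\in V: A\cap\tau(v)\neq\emptyset,\ A\not\subseteq\tau(v)\}$, $V(A,+)=\{v\in V: A\cap\tau(v)=\emptyset\}$. *)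

(* Defs.v *)
(* Weyl groups are realised concretely from a (reduced,
   crystallographic) root system in the Euclidean space 'rV[R]_n, R : realType;
   C := R[i] (the complex numbers over the reals R). *)
From HB Require Import structures.
From mathcomp Require Import all_boot all_order all_algebra.
From mathcomp Require Import reals complex.
Set Implicit Arguments. Unset Strict Implicit. Unset Printing Implicit Defensive.
Import Order.TTheory GRing.Theory Num.Theory.
Local Open Scope ring_scope.

Section Defs.
Variable R : realType.
Variable n : nat.

Definition dot (u v : 'rV[R]_n) : R := (u *m v^T) 0 0.

Definition refl (a v : 'rV[R]_n) : 'rV[R]_n :=
  v - ((2 * dot v a) / dot a a) *: a.

(* Its matrix (acting on row vectors: v *m refl_mx a = refl a v). *)
Definition refl_mx (a : 'rV[R]_n) : 'M[R]_n := lin1_mx (refl a).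

Definition is_root_system (Phi : seq 'rV[R]_n) : Prop :=
  [/\ 0 \notin Phi,
      (forall v : 'rV[R]_n, exists c : 'I_(size Phi) -> R,
          v = \sum_(i < size Phi) c i *: Phi`_i),
      (forall a b, a \in Phi -> b \in Phi -> refl a b \in Phi),
      (forall a b, a \in Phi -> b \in Phi ->
          exists z : int, (2 * dot b a) / dot a a = z%:~R) &
      (forall a (c : R), a \in Phi -> c *: a \in Phi -> c = 1 \/ c = -1)].

Definition is_simple_system (Phi : seq 'rV[R]_n) (I : finType)
    (delta : I -> 'rV[R]_n) : Prop :=
  [/\ injective delta,
      (forall i, delta i \in Phi),
      (forall c : I -> R, \sum_i c i *: delta i = 0 -> forall i, c i = 0) &
      (forall b, b \in Phi -> exists c : I -> int,
          b = \sum_i (c i)%:~R *: delta i /\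
          ((forall i, (0 <= c i)%R) \/ (forall i, (c i <= 0)%R)))].

Inductive gen_grp (S : 'M[R]_n -> Prop) : 'M[R]_n -> Prop :=
  | gen_one : gen_grp S 1%:M
  | gen_el g : S g -> gen_grp S g
  | gen_mul g h : gen_grp S g -> gen_grp S h -> gen_grp S (g *m h)
  | gen_inv g : gen_grp S g -> gen_grp S (invmx g).

Definition WA (I : finType) (delta : I -> 'rV[R]_n) (A : {set I}) :=
  gen_grp (fun g => exists2 i, i \in A & g = refl_mx (delta i)).

Definition Wgrp (I : finType) (delta : I -> 'rV[R]_n) := WA delta setT.

End Defs.

Section WGraph.
Variable R : realType.
Local Notation C := (R[i]).
Variable V : finType.

(* Vectors of CV are functions V -> C (coordinates in the basis V);
   linear endomorphisms are V x V matrices: M u v = coefficient of u in M(v). *)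
Definition vecV := V -> C.
Definition linV := V -> V -> C.
Definition basis_vec (u : V) : vecV := fun v => (u == v)%:R.
Definition lapply (M : linV) (x : vecV) : vecV := fun u => \sum_v M u v * x v.
Definition lcomp (M N : linV) : linV := fun u v => \sum_w M u w * N w v.
Definition lid : linV := fun u v => (u == v)%:R.

Definition sW (I : finType) (m : V -> V -> C) (tau : V -> {set I}) (i : I) : linV :=
  fun u v =>
    if i \in tau v then - (u == v)%:R
    else (u == v)%:R - (if i \in tau u then m u v else 0).

Definition is_Wrep (n : nat) (I : finType) (delta : I -> 'rV[R]_n)
    (m : V -> V -> C) (tau : V -> {set I}) (rho : 'M[R]_n -> linV) : Prop :=
  [/\ rho 1%:M = lid,
      (forall g h, Wgrp delta g -> Wgrp delta h -> rho (g *m h) = lcomp (rho g) (rho h)) &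
      (forall i, rho (refl_mx (delta i)) = sW m tau i)].

Definition weak_Wgraph (n : nat) (I : finType) (delta : I -> 'rV[R]_n)
    (m : V -> V -> C) (tau : V -> {set I}) : Prop :=
  exists rho, is_Wrep delta m tau rho.

Definition VAminus (I : finType) (tau : V -> {set I}) (A : {set I}) : {set V} :=
  [set v | A \subset tau v].
Definition VAzero (I : finType) (tau : V -> {set I}) (A : {set I}) : {set V} :=
  [set v | (A :&: tau v != set0) && ~~ (A \subset tau v)].
Definition VAplus (I : finType) (tau : V -> {set I}) (A : {set I}) : {set V} :=
  [set v | A :&: tau v == set0].

Definition in_span (S : {set V}) (x : vecV) : Prop :=
  exists c : V -> C, forall v, x v = \sum_(u in S) c u * basis_vec u v.

End WGraph.

(* Main.v *)
Require Import Defs.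
From HB Require Import structures.
From mathcomp Require Import all_boot all_order all_algebra.
From mathcomp Require Import reals complex.
Import Order.TTheory GRing.Theory Num.Theory.
Local Open Scope ring_scope.

Lemma dot_self_neq0 (R : realType) n (a : 'rV[R]_n) : a != 0 -> dot a a != 0.
Proof.
move=> an0; apply/negP => /eqP H.
move/negP: an0; apply; apply/eqP/matrixP => i j.
rewrite (ord1 i) mxE.
have H' : \sum_(k < n) a 0 k * a 0 k = dot a a.
  by rewrite /dot mxE; apply: eq_bigr => k _; rewrite mxE.
rewrite H in H'.
have Hp : forall k : 'I_n, predT k -> 0 <= a 0 k * a 0 k.
  by move=> k _; rewrite -expr2 sqr_ge0.
have := psumr_eq0P Hp H' (i:=j) isT.
move=> /eqP; rewrite mulf_eq0 orbb => /eqP //.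
Qed.

Lemma refl_mxE (R : realType) n (a : 'rV[R]_n) :
  refl_mx a = 1%:M - (2 / dot a a) *: (a^T *m a).
Proof.
apply/matrixP => i j.
rewrite /refl_mx /lin1_mx mxE /refl !mxE.
have -> : dot 'e_i a = a 0 i.
  by rewrite /dot -rowE !mxE.
rewrite big_ord1 !mxE.
congr (_ - _); last by rewrite !mulrA (mulrAC 2).
by rewrite eqxx /= eq_sym.
Qed.

Lemma refl_mx_invol (R : realType) n (a : 'rV[R]_n) : a != 0 ->
  refl_mx a *m refl_mx a = 1%:M.
Proof.
move=> an0; have d0 := @dot_self_neq0 R n a an0.
rewrite refl_mxE.
set k := 2 / dot a a; set P := a^T *m a.
have PP : P *m P = dot a a *: P.
  rewrite /P mulmxA -(mulmxA a^T a) (mx11_scalar (a *m a^T)).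
  by rewrite mul_mx_scalar -scalemxAl.
rewrite mulmxBl mul1mx mulmxBr mulmx1 -scalemxAl -scalemxAr PP !scalerA.
have -> : k * k * dot a a = k * 2 by rewrite /k -!mulrA mulVf // mulr1.
have -> : (k*2) *: P = k*:P + k*:P by rewrite -scalerDl -mulr2n mulr_natr.
by rewrite opprB addrK subrK.
Qed.

Section Blk.
Variable R : realType.
Variable V : finType.

Definition blk (S : {set V}) (M : linV R V) :=
  forall u v, u \notin S -> v \in S -> M u v = 0.

Lemma blk_lid S : blk S (@lid R V).
Proof.
move=> u v uS vS; rewrite /lid; case: eqP => // euv.
by rewrite euv vS in uS.
Qed.

Lemma blk_lcomp S M N : blk S M -> blk S N -> blk S (lcomp M N).
Proof.
move=> bM bN u v uS vS; rewrite /lcomp big1 // => w _.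
case: (boolP (w \in S)) => wS; first by rewrite bM // mul0r.
by rewrite bN // mulr0.
Qed.

Lemma blk_sW (I : finType) (m : V -> V -> R[i]) (tau : V -> {set I}) i (S : {set V}) :
  (forall u v, u \notin S -> v \in S -> i \notin tau v -> i \notin tau u) ->
  blk S (sW m tau i).
Proof.
move=> H u v uS vS; rewrite /sW.
have -> : (u == v) = false by apply/negP => /eqP e; rewrite e vS in uS.
rewrite oppr0; case: ifP => // /negbT iv.
by rewrite (negbTE (H u v uS vS iv)) subr0.
Qed.

Lemma span_zero (S : {set V}) (x : vecV R V) : in_span S x <-> (forall v, v \notin S -> x v = 0).
Proof.
split.
  move=> [c Hc] v vS; rewrite Hc big1 // => u uS.
  rewrite /basis_vec; case: eqP => [e|_]; last by rewrite mulr0.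
  by rewrite -e uS in vS.
move=> H; exists x => v.
case: (boolP (v \in S)) => vS.
  rewrite (bigD1 v) //= /basis_vec eqxx mulr1 big1 ?addr0 // => u /andP [_ uv].
  by rewrite (negbTE uv) mulr0.
rewrite H // big1 // => u uS; rewrite /basis_vec.
case: eqP => [e|_]; last by rewrite mulr0.
by rewrite -e uS in vS.
Qed.

Lemma blk_span (S : {set V}) M (x : vecV R V) : blk S M -> in_span S x -> in_span S (lapply M x).
Proof.
move=> bM /span_zero Hx; apply/span_zero => u uS.
rewrite /lapply big1 // => v _.
case: (boolP (v \in S)) => vS; first by rewrite bM // mul0r.
by rewrite Hx // mulr0.
Qed.
End Blk.

Lemma invmx_mul (R : comUnitRingType) n (g h : 'M[R]_n) :
  g \in unitmx -> h \in unitmx -> invmx (g *m h) = invmx h *m invmx g.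
Proof.
move=> gu hu.
have ghu : g *m h \in unitmx by rewrite unitmx_mul gu hu.
have E : (g *m h) *m (invmx h *m invmx g) = 1%:M.
  by rewrite mulmxA -(mulmxA g) mulmxV // mulmx1 mulmxV.
by rewrite -[LHS]mulmx1 -E mulmxA mulVmx // mul1mx.
Qed.

Theorem proposition2p5 (R : realType) (n : nat) (Phi : seq 'rV[R]_n)
    (I : finType) (delta : I -> 'rV[R]_n) (V : finType)
    (m : V -> V -> R[i]) (tau : V -> {set I}) (rho : 'M[R]_n -> linV R V)
    (A : {set I}) :
  is_root_system Phi ->
  is_simple_system Phi delta ->
  is_Wrep delta m tau rho ->
  forall w : 'M[R]_n, WA delta A w ->
    (forall x : vecV R V, in_span (VAminus tau A) x ->
        in_span (VAminus tau A) (lapply (rho w) x)) /\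
    (forall x : vecV R V, in_span (VAminus tau A :|: VAzero tau A) x ->
        in_span (VAminus tau A :|: VAzero tau A) (lapply (rho w) x)).
Proof.
move=> [H0 _ _ _ _] [_ Hin _ _] [rho1 rhoM rhoS] w HW.
set S1 := VAminus tau A; set S2 := S1 :|: VAzero tau A.
pose P (M : linV R V) := @blk R V S1 M /\ @blk R V S2 M.
suff [_ _ [P1 P2] _] : [/\ Wgrp delta w, w \in unitmx, P (rho w) & P (rho (invmx w))].
  by split => x; apply: blk_span.
have reflI i : refl_mx (delta i) *m refl_mx (delta i) = 1%:M.
  apply: refl_mx_invol; apply/negP => /eqP e.
  by have := Hin i; rewrite e (negbTE H0).
have Pgen i : i \in A -> P (sW m tau i).
  move=> iA; split; apply: blk_sW => u v uS vS ivt.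
    by move: vS; rewrite inE => /subsetP/(_ i iA) iv; rewrite iv in ivt.
  apply/negP => iu; move: uS; rewrite !inE negb_or => /andP [u1 u2].
  move: u2; rewrite u1 andbT negbK => /eqP/setP/(_ i); rewrite !inE iA iu.
  done.
have Pmul g h : P g -> P h -> P (lcomp g h).
  by move=> [g1 g2] [h1 h2]; split; apply: blk_lcomp.
elim: HW => {w}.
- by rewrite invmx1 rho1; split => //; [apply: gen_one | apply: unitmx1 | split; apply: blk_lid
   | split; apply: blk_lid].
- move=> g [i iA ->].
  have ru := proj1 (mulmx1_unit (reflI i)).
  have -> : invmx (refl_mx (delta i)) = refl_mx (delta i).
    by rewrite -[LHS]mulmx1 -(reflI i) mulmxA mulVmx // mul1mx.
  rewrite rhoS; split => //; [apply: gen_el; exists i; rewrite ?inE | |]; by [|apply: Pgen].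
- move=> g h _ [gW gu Pg Pig] _ [hW hu Ph Pih].
  rewrite invmx_mul // !rhoM //; try by apply: gen_inv.
  split; [exact: gen_mul | by rewrite unitmx_mul gu hu | exact: Pmul | exact: Pmul].
- move=> g _ [gW gu Pg Pig]; rewrite invmxK; split => //; first exact: gen_inv.
  by rewrite unitmx_inv.
Qed.
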